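(* Let $S$ be a finite set of axis-parallel unit squares all containing the origin, with pairwise distinct $x$-coordinates of top-right corners (and pairwise distinct $y$-coordinates). Store $S$ in a leaf-oriented red-black tree $\mathcal{T}$ keyed by the $x$-coordinate $s_x$ of the top-right corner, and for each node $v$ let $s_{\max}(v)$ (resp. $s_{\min}(v)$) be the square $s\in S(v)$ maximizing (resp. minimizing) $s_y$. For $s\in S$ define $N_{NE}(s)$, $N_{SE}(s)$, $N_{SW}(s)$, $N_{NW}(s)$ as the sets of internal nodes $v$ with $s_{\max}(\mathit{right}(v))=s$, $s_{\min}(\mathit{right}(v))=s$, $s_{\min}(\mathit{left}(v))=s$, $s_{\max}(\mathit{left}(v))=s$, respectively, and $N(s)$ as the union of these four sets and the leaf storing $s$. Let $h(s)=\max_{v\in N(s)}\mathrm{height}(v)$. Set $\mathit{col}(s)=0$ if $h(s)=0$, and otherwise $\mathit{col}(s)=4h(s)+j$, where $j=0$ if $h(s)=\max_{v\in N_{NE}(s)}\mathrm{height}(v)$, else $j=1$ if $h(s)=\max_{v\in N_{SE}(s)}\mathrm{height}(v)$, else $j=2$ if $h(s)=\max_{v\in N_{SW}(s)}\mathrm{height}(v)$, and $j=3$ otherwise. Then this coloring is conflict-free with respect to points.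
   Context: A leaf-oriented red-black tree stores one key per leaf (here one square per leaf, ordered by $s_x$), and internal nodes store splitting values strictly between consecutive keys. For a node $v$: $\mathit{left}(v)$, $\mathit{right}(v)$ are its children, $S(v)$ is the set of squares in the leaves of its subtree, and $\mathrm{height}(v)$ is the height of its subtree (0 for a leaf); $s_y$ is the $y$-coordinate of the top-right corner of $s$. A coloring is conflict-free with respect to points if every point contained in at least one square lies in some square whose color is unique among the squares containing that point. A maximum over an empty set is taken as $-\infty$. *)

(* Defs.v *)
From HB Require Import structures.
From mathcomp Require Import all_boot all_order all_algebra.
Set Implicit Arguments. Unset Strict Implicit. Unset Printing Implicit Defensive.
Import Order.TTheory GRing.Theory Num.Theory.
Local Open Scope ring_scope.

(* A square is represented by its top-right corner (s_x, s_y); it is the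
   closed axis-parallel unit square [s_x - 1, s_x] x [s_y - 1, s_y]. *)
Definition square (R : realFieldType) := (R * R)%type.

Definition in_square (R : realFieldType) (s : square R) (p : R * R) : bool :=
  (s.1 - 1 <= p.1 <= s.1) && (s.2 - 1 <= p.2 <= s.2).

Inductive rbcolor := Red | Black.

Inductive lotree (R : realFieldType) :=
| Leaf of square R
| Node of rbcolor & R & lotree R & lotree R.
Arguments Leaf {R}.
Arguments Node {R}.

Section Tree.
Context {R : realFieldType}.

Fixpoint leaves (t : lotree R) : seq (square R) :=
  match t with Leaf s => [:: s] | Node _ _ l r => leaves l ++ leaves r end.

Fixpoint height (t : lotree R) : nat :=
  match t with Leaf _ => 0%N | Node _ _ l r => (maxn (height l) (height r)).+1 end.

Fixpoint subtrees (t : lotree R) : seq (lotree R) :=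
  match t with
  | Leaf _ => [:: t]
  | Node _ _ l r => t :: subtrees l ++ subtrees r
  end.

Fixpoint search_tree (t : lotree R) : bool :=
  match t with
  | Leaf _ => true
  | Node _ k l r =>
      [&& all (fun s => s.1 < k) (leaves l), all (fun s => k < s.1) (leaves r),
          search_tree l & search_tree r]
  end.

Definition black_root (t : lotree R) : bool :=
  if t is Node Red _ _ _ then false else true.

Inductive rb_ok : lotree R -> nat -> Prop :=
| rb_leaf s : rb_ok (Leaf s) 0
| rb_black k l r n : rb_ok l n -> rb_ok r n -> rb_ok (Node Black k l r) n.+1
| rb_red k l r n : rb_ok l n -> rb_ok r n -> black_root l -> black_root r ->
    rb_ok (Node Red k l r) n.

Definition red_black (t : lotree R) : Prop := black_root t /\ exists n, rb_ok t n.

Fixpoint smax (t : lotree R) : square R :=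
  match t with
  | Leaf s => s
  | Node _ _ l r => let a := smax l in let b := smax r in
                    if a.2 < b.2 then b else a
  end.
Fixpoint smin (t : lotree R) : square R :=
  match t with
  | Leaf s => s
  | Node _ _ l r => let a := smin l in let b := smin r in
                    if b.2 < a.2 then b else a
  end.

Definition is_NE (s : square R) (v : lotree R) : bool :=
  if v is Node _ _ _ r then smax r == s else false.
Definition is_SE (s : square R) (v : lotree R) : bool :=
  if v is Node _ _ _ r then smin r == s else false.
Definition is_SW (s : square R) (v : lotree R) : bool :=
  if v is Node _ _ l _ then smin l == s else false.
Definition is_NW (s : square R) (v : lotree R) : bool :=
  if v is Node _ _ l _ then smax l == s else false.
Definition is_leaf_of (s : square R) (v : lotree R) : bool :=
  if v is Leaf s' then s' == s else false.

(* maximum of a finite list of naturals; None plays the role of -oo *)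
Definition maxo (l : seq nat) : option nat :=
  foldr (fun x acc => match acc with None => Some x | Some y => Some (maxn x y) end)
        None l.

Definition maxheight (T : lotree R) (P : lotree R -> bool) : option nat :=
  maxo [seq height v | v <- subtrees T & P v].

Definition hN (T : lotree R) (s : square R) : option nat :=
  maxheight T (fun v => [|| is_NE s v, is_SE s v, is_SW s v, is_NW s v
                          | is_leaf_of s v]).

Definition sq_col (T : lotree R) (s : square R) : nat :=
  match hN T s with
  | None => 0%N
  | Some 0 => 0%N
  | Some h =>
      let j := if maxheight T (is_NE s) == Some h then 0%N
               else if maxheight T (is_SE s) == Some h then 1%N
               else if maxheight T (is_SW s) == Some h then 2%N
               else 3%N in
      (4 * h + j)%N
  end.

Definition conflict_free (S : seq (square R)) (c : square R -> nat) : Prop :=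
  forall p : R * R, (exists2 s, s \in S & in_square s p) ->
    exists2 s, s \in S & in_square s p /\
      forall s', s' \in S -> in_square s' p -> s' != s -> c s' != c s.

End Tree.

(* Main.v *)
Require Import Defs.
From HB Require Import structures.
From mathcomp Require Import all_boot all_order all_algebra zify lra.
Set Implicit Arguments. Unset Strict Implicit. Unset Printing Implicit Defensive.
Import Order.TTheory GRing.Theory Num.Theory.
Local Open Scope ring_scope.

Definition rb_eqb (a b : rbcolor) :=
  match a, b with Red, Red | Black, Black => true | _, _ => false end.
Lemma rb_eqP : Equality.axiom rb_eqb.
Proof. by case; case; constructor. Qed.
HB.instance Definition _ := hasDecEq.Build rbcolor rb_eqP.

Section Aux.
Variable R : realFieldType.

Fixpoint lot_eqb (t u : lotree R) : bool :=
  match t, u with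
  | Leaf a, Leaf b => a == b
  | Node c k l r, Node c' k' l' r' =>
      [&& c == c', k == k', lot_eqb l l' & lot_eqb r r']
  | _, _ => false
  end.
Lemma lot_eqP : Equality.axiom lot_eqb.
Proof.
elim=> [a|c k l IHl r IHr] [b|c' k' l' r'] /=; try by constructor.
  by apply: (iffP eqP) => [->|[]].
apply: (iffP idP).
  by case/and4P=> /eqP-> /eqP-> /IHl-> /IHr->.
by case=> <- <- <- <-; rewrite !eqxx /=; apply/andP; split; [apply/IHl|apply/IHr].
Qed.
HB.instance Definition _ := hasDecEq.Build (lotree R) lot_eqP.

Implicit Types t v w : lotree R.

Lemma subtrees_self t : t \in subtrees t.
Proof. by case: t => [s|c k l r] /=; rewrite inE eqxx. Qed.

Lemma subtrees_leaves v t : v \in subtrees t -> {subset leaves v <= leaves t}.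
Proof.
elim: t => [s|c k l IHl r IHr] /=; first by rewrite inE => /eqP->.
rewrite inE mem_cat => /orP[/eqP->//|/orP[/IHl H|/IHr H]] x /H; rewrite mem_cat => ->//.
by rewrite orbT.
Qed.

Lemma subtrees_height v t : v \in subtrees t -> (height v <= height t)%N /\ (height v = height t -> v = t).
Proof.
elim: t => [s|c k l IHl r IHr] /=; first by rewrite inE => /eqP->.
rewrite inE mem_cat => /orP[/eqP->//|/orP[/IHl [H _]|/IHr [H _]]]; split; lia.
Qed.

Lemma subtrees_trans u v t : u \in subtrees v -> v \in subtrees t -> u \in subtrees t.
Proof.
move=> Hu; elim: t => [s|c k l IHl r IHr] /=; first by rewrite inE => /eqP Hv; subst v.
rewrite inE mem_cat => /orP[/eqP Hv|/orP[/IHl H|/IHr H]]; first by subst v.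
  by rewrite inE mem_cat H orbT.
by rewrite inE mem_cat H !orbT.
Qed.

Lemma leaf_subtree s t : s \in leaves t -> Leaf s \in subtrees t.
Proof.
elim: t => [s'|c k l IHl r IHr] /=; first by rewrite !inE => /eqP->.
by rewrite mem_cat inE mem_cat => /orP[/IHl->|/IHr->]; rewrite ?orbT.
Qed.

Lemma nested t v w x : uniq (leaves t) -> v \in subtrees t -> w \in subtrees t ->
  x \in leaves v -> x \in leaves w -> v \in subtrees w \/ w \in subtrees v.
Proof.
elim: t v w => [s|c k l IHl r IHr] v w /=.
  by rewrite !inE => _ /eqP-> /eqP->; left; rewrite inE.
rewrite cat_uniq => /and3P[ul dis ur].
rewrite !inE !mem_cat => /orP[/eqP->|Hv]; first by move=> Hw; right; rewrite /= inE mem_cat.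
move=> /orP[/eqP->|Hw]; first by left; rewrite /= inE mem_cat Hv orbT.
case/orP: Hv => Hv; case/orP: Hw => Hw xv xw.
- exact: IHl.
- have := subtrees_leaves Hv xv; have := subtrees_leaves Hw xw => xr xl.
  by move/hasPn: dis => /(_ x xr); rewrite xl.
- have := subtrees_leaves Hv xv; have := subtrees_leaves Hw xw => xl xr.
  by move/hasPn: dis => /(_ x xr); rewrite xl.
- exact: IHr.
Qed.

Lemma smax_mem t : smax t \in leaves t.
Proof.
elim: t => [s|c k l IHl r IHr] /=; first by rewrite inE.
by case: ifP => _; rewrite mem_cat ?IHl ?IHr ?orbT.
Qed.
Lemma smin_mem t : smin t \in leaves t.
Proof.
elim: t => [s|c k l IHl r IHr] /=; first by rewrite inE.
by case: ifP => _; rewrite mem_cat ?IHl ?IHr ?orbT.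
Qed.
Lemma smax_ge t s : s \in leaves t -> s.2 <= (smax t).2.
Proof.
elim: t => [s'|c k l IHl r IHr] /=; first by rewrite inE => /eqP->.
rewrite mem_cat => /orP[/IHl|/IHr] H; case: ifP => [H'|/negbT H']; rewrite -?leNgt in H'; lra.
Qed.
Lemma smin_le t s : s \in leaves t -> (smin t).2 <= s.2.
Proof.
elim: t => [s'|c k l IHl r IHr] /=; first by rewrite inE => /eqP->.
rewrite mem_cat => /orP[/IHl|/IHr] H; case: ifP => [H'|/negbT H']; rewrite -?leNgt in H'; lra.
Qed.

Lemma maxo_some l m : maxo l = Some m -> m \in l /\ forall x, x \in l -> (x <= m)%N.
Proof.
elim: l m => [|x l IH] m //=.
case E: (maxo l) => [y|] [<-].
  have [yl yb] := IH _ E; split.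
    by case: (leqP x y) => H; rewrite inE ?yl ?orbT ?eqxx.
  by move=> z; rewrite inE => /orP[/eqP->|/yb]; lia.
split; first by rewrite inE eqxx.
move=> z; rewrite inE => /orP[/eqP->//|zl].
by case: l IH E zl => //= a l' _; case: (maxo l').
Qed.

Lemma maxo_ex l x : x \in l -> exists m, maxo l = Some m.
Proof.
elim: l => [|y l IH] //= _.
by case: (maxo l); eexists.
Qed.

Variable T : lotree R.

Lemma maxheightP (P : lotree R -> bool) m : maxheight T P = Some m ->
  (exists2 v, v \in subtrees T & P v && (height v == m)) /\
  forall v, v \in subtrees T -> P v -> (height v <= m)%N.
Proof.
rewrite /maxheight => /maxo_some [/mapP [v]]; rewrite mem_filter => /andP[Pv vT] -> Hb.
split; first by exists v => //; rewrite Pv eqxx.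
by move=> u uT Pu; apply: Hb; apply/mapP; exists u => //; rewrite mem_filter Pu uT.
Qed.

Lemma maxheight_ex (P : lotree R -> bool) v : v \in subtrees T -> P v -> exists m, maxheight T P = Some m.
Proof.
move=> vT Pv; apply: (@maxo_ex _ (height v)); apply/mapP; exists v => //.
by rewrite mem_filter Pv vT.
Qed.

Lemma maxheight_eq (P : lotree R -> bool) v h : v \in subtrees T -> P v -> height v = h ->
  (forall u, u \in subtrees T -> P u -> (height u <= h)%N) -> maxheight T P = Some h.
Proof.
move=> vT Pv hv Hb; have [m Em] := maxheight_ex vT Pv.
have [[u uT /andP[Pu /eqP hu]] Hm] := maxheightP Em.
have := Hm v vT Pv; have := Hb u uT Pu; rewrite Em; move=> *; congr Some; lia.
Qed.

Definition lab (s : square R) v :=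
  [|| is_NE s v, is_SE s v, is_SW s v, is_NW s v | is_leaf_of s v].

Definition Pj (j : nat) (s : square R) v :=
  match j with 0 => is_NE s v | 1 => is_SE s v | 2 => is_SW s v | _ => is_NW s v end.

Lemma Pj_inj j s1 s2 v : Pj j s1 v -> Pj j s2 v -> s1 = s2.
Proof.
by case: j => [|[|[|j]]]; case: v => // c k l r /= /eqP<- /eqP.
Qed.

Lemma Pj_mem j s v : Pj j s v -> s \in leaves v.
Proof.
case: v => [|c k l r]; first by case: j => [|[|[|j]]].
by case: j => [|[|[|j]]] /= /eqP<-; rewrite mem_cat ?smax_mem ?smin_mem ?orbT.
Qed.

Lemma lab_mem s v : lab s v -> s \in leaves v.
Proof.
case/orP => [H|/orP[H|/orP[H|/orP[H|H]]]].
- exact: (@Pj_mem 0).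
- exact: (@Pj_mem 1).
- exact: (@Pj_mem 2).
- exact: (@Pj_mem 3).
by move: H; case: v => //= s' /eqP->; rewrite inE.
Qed.

Lemma hN_ex s : s \in leaves T -> exists h, hN T s = Some h.
Proof.
move=> sT; rewrite /hN; apply: (@maxheight_ex _ (Leaf s)); first exact: leaf_subtree.
by rewrite /= eqxx ?orbT.
Qed.

Lemma col_bounds s h : hN T s = Some h -> (4*h <= sq_col T s <= 4*h+3)%N.
Proof.
rewrite /sq_col => ->; case: h => [//|h].
by repeat case: ifP => _; lia.
Qed.

Lemma col_witness s h : hN T s = Some h -> (0 < h)%N ->
  exists2 v, v \in subtrees T & (height v == h) && Pj (sq_col T s - 4*h) s v.
Proof.
move=> E hp; have [[v0 v0T /andP[l0 /eqP hv0]] Hb] := maxheightP E.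
rewrite /sq_col E; case: h hp E Hb hv0 => [//|h] _ E Hb hv0.
have mk : forall j, j \in [:: 0; 1; 2]%N ->
    maxheight T (Pj j s) = Some h.+1 ->
    exists2 v, v \in subtrees T & (height v == h.+1) && Pj j s v.
  move=> j _ /maxheightP [[v vT /andP[Pv hv]] _].
  by exists v => //; rewrite hv.
case: ifP => [/eqP /(mk 0%N)|E0]; first by rewrite addn0 subnn; apply.
case: ifP => [/eqP /(mk 1%N)|E1]; first by rewrite addKn; apply.
case: ifP => [/eqP /(mk 2%N)|E2]; first by rewrite addKn; apply.
rewrite addKn; exists v0 => //; rewrite hv0 eqxx /=.
have bnd : forall P : lotree R -> bool, (forall u, P u -> lab s u) ->
   P v0 -> maxheight T P = Some h.+1.
  move=> P PH Pv; apply: (maxheight_eq v0T Pv hv0) => u uT Pu.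
  exact: Hb _ uT (PH _ Pu).
case/orP: l0 => [H|/orP[H|/orP[H|/orP[H|H]]]].
- by move: E0; rewrite (@bnd (is_NE s)) ?eqxx // => u Hu; rewrite /lab Hu.
- by move: E1; rewrite (@bnd (is_SE s)) ?eqxx // => u Hu; rewrite /lab Hu !orbT.
- by move: E2; rewrite (@bnd (is_SW s)) ?eqxx // => u Hu; rewrite /lab Hu !orbT.
- exact: H.
by clear bnd; case: v0 v0T hv0 H.
Qed.

Lemma no_conflict w (t1 t2 : square R) : uniq (leaves T) -> w \in subtrees T ->
  t1 \in leaves w -> t2 \in leaves w -> t1 != t2 ->
  sq_col T t1 = sq_col T t2 -> (4 * height w <= sq_col T t1)%N -> False.
Proof.
move=> uT wT t1w t2w ne ec hc.
have [h1 E1] := hN_ex (subtrees_leaves wT t1w).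
have [h2 E2] := hN_ex (subtrees_leaves wT t2w).
have B1 := col_bounds E1; have B2 := col_bounds E2.
have eh : h1 = h2 by move: B1 B2; rewrite ec; clear; lia.
subst h2.
case: (posnP h1) => [h0|hp].
  subst h1; case: w wT t1w t2w hc => [s|c k l r] _ /=; last by lia.
  by rewrite !inE => /eqP F1 /eqP F2; rewrite F1 F2 eqxx in ne.
have Hw : (height w <= h1)%N by clear -hc B1; lia.
have [v1 v1T /andP[/eqP hv1 P1]] := col_witness E1 hp.
have [v2 v2T /andP[/eqP hv2 P2]] := col_witness E2 hp.
rewrite -ec in P2.
move: P1 P2; generalize (sq_col T t1 - 4 * h1)%N => j P1 P2.
have cont : forall v (t : square R), v \in subtrees T -> height v = h1 -> t \in leaves v ->
    t \in leaves w -> w \in subtrees v.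
  move=> v t vT hv tv tw; case: (nested uT vT wT tv tw) => // /subtrees_height [H1 H2].
  by rewrite H2; [apply: subtrees_self | clear -H1 Hw hv; lia].
have w1 := cont _ _ v1T hv1 (Pj_mem P1) t1w.
have w2 := cont _ _ v2T hv2 (Pj_mem P2) t2w.
have t1v1 := subtrees_leaves w1 t1w; have t1v2 := subtrees_leaves w2 t1w.
have ev : v1 = v2.
  case: (nested uT v1T v2T t1v1 t1v2) => /subtrees_height [H1 H2].
    by apply: H2; clear -hv1 hv2; lia.
  by symmetry; apply: H2; clear -hv1 hv2; lia.
subst v2; move: (Pj_inj P1 P2) => /eqP; by rewrite (negbTE ne).
Qed.

End Aux.

Section Geo.
Variable R : realFieldType.
Implicit Types v w : lotree R.

Lemma orig (s : square R) : in_square s (0,0) ->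
  [/\ s.1 - 1 <= 0, 0 <= s.1, s.2 - 1 <= 0 & 0 <= s.2].
Proof. by rewrite /in_square /= => /andP[/andP[-> ->] /andP[-> ->]]. Qed.

Lemma mk_in (s : square R) (p : R * R) : s.1 - 1 <= p.1 -> p.1 <= s.1 -> s.2 - 1 <= p.2 -> p.2 <= s.2 ->
  in_square s p.
Proof. by move=> *; rewrite /in_square; apply/andP; split; apply/andP. Qed.

Lemma un_in (s : square R) (p : R * R) : in_square s p ->
  [/\ s.1 - 1 <= p.1, p.1 <= s.1, s.2 - 1 <= p.2 & p.2 <= s.2].
Proof. by rewrite /in_square /= => /andP[/andP[-> ->] /andP[-> ->]]. Qed.

Lemma find_w (p : R * R) v : search_tree v -> all (fun s => in_square s (0,0)) (leaves v) ->
  has (fun s => in_square s p) (leaves v) ->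
  exists2 w, w \in subtrees v &
    (forall s, s \in leaves v -> in_square s p -> s \in leaves w) /\
    exists2 t0, t0 \in leaves v & in_square t0 p && lab t0 w.
Proof.
elim: v => [s|c k l IHl r IHr] /=.
  move=> _ _; rewrite orbF => sp; exists (Leaf s); first by rewrite inE.
  split=> //; exists s; rewrite ?inE // sp /lab /= eqxx ?orbT //.
move=> /and4P[sl sr Hl Hr]; rewrite all_cat => /andP[ol or]; rewrite has_cat.
case El: (has _ (leaves l)); case Er: (has _ (leaves r)) => //= _.
- have [tl tlL tlp] := hasP El; have [tr trR trp] := hasP Er.
  exists (Node c k l r); first by rewrite inE eqxx.
  split=> //.
  have [x1 x2 y1 y2] := un_in tlp; have [x3 x4 y3 y4] := un_in trp.
  have ktl : tl.1 < k by apply: (allP sl).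
  have ktr : k < tr.1 by apply: (allP sr).
  case: (leP 0 p.1) => hp1.
  + have Hx : forall s, s \in leaves r -> s.1 - 1 <= p.1 <= s.1.
      move=> s sR; have [o1 o2 o3 o4] := orig (allP or s sR).
      have ks : k < s.1 by apply: (allP sr).
      apply/andP; split; lra.
    case: (leP 0 p.2) => hp2.
    * exists (smax r); first by rewrite mem_cat smax_mem orbT.
      have := Hx _ (smax_mem r) => /andP[h1 h2].
      have [o1 o2 o3 o4] := orig (allP or _ (smax_mem r)).
      have := smax_ge trR => h3.
      rewrite mk_in //=; try lra.
      by rewrite /lab /= eqxx.
    * exists (smin r); first by rewrite mem_cat smin_mem orbT.
      have := Hx _ (smin_mem r) => /andP[h1 h2].
      have [o1 o2 o3 o4] := orig (allP or _ (smin_mem r)).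
      have := smin_le trR => h3.
      rewrite mk_in //=; try lra.
      by rewrite /lab /= eqxx orbT.
  + have Hx : forall s, s \in leaves l -> s.1 - 1 <= p.1 <= s.1.
      move=> s sL; have [o1 o2 o3 o4] := orig (allP ol s sL).
      have ks : s.1 < k by apply: (allP sl).
      apply/andP; split; lra.
    case: (leP 0 p.2) => hp2.
    * exists (smax l); first by rewrite mem_cat smax_mem.
      have := Hx _ (smax_mem l) => /andP[h1 h2].
      have [o1 o2 o3 o4] := orig (allP ol _ (smax_mem l)).
      have := smax_ge tlL => h3.
      rewrite mk_in //=; try lra.
      by rewrite /lab /= eqxx !orbT.
    * exists (smin l); first by rewrite mem_cat smin_mem.
      have := Hx _ (smin_mem l) => /andP[h1 h2].
      have [o1 o2 o3 o4] := orig (allP ol _ (smin_mem l)).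
      have := smin_le tlL => h3.
      rewrite mk_in //=; try lra.
      by rewrite /lab /= eqxx !orbT.
- have [w wT [Hs [t0 t0L Ht0]]] := IHl Hl ol El.
  exists w; first by rewrite inE mem_cat wT orbT.
  split; last by exists t0; rewrite ?mem_cat ?t0L.
  move=> s; rewrite mem_cat => /orP[sL|sR] sp; first exact: Hs.
  by move/hasPn: Er => /(_ s sR); rewrite sp.
- have [w wT [Hs [t0 t0L Ht0]]] := IHr Hr or Er.
  exists w; first by rewrite inE mem_cat wT !orbT.
  split; last by exists t0; rewrite ?mem_cat ?t0L ?orbT.
  move=> s; rewrite mem_cat => /orP[sL|sR] sp; last exact: Hs.
  by move/hasPn: El => /(_ s sL); rewrite sp.
Qed.

Lemma argmax (A : eqType) (l : seq A) (f : A -> nat) x : x \in l ->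
  exists2 y, y \in l & forall z, z \in l -> (f z <= f y)%N.
Proof.
elim: l x => [//|a l IH] x _.
case: (boolP (l == [::])) => [/eqP->|].
  by exists a; rewrite ?inE // => z; rewrite inE => /eqP->.
case: l IH => [//|b l] IH _.
have [y yl Hy] := IH b (mem_head b l).
case: (leqP (f a) (f y)) => H.
  exists y; first by rewrite inE yl orbT.
  by move=> z; rewrite inE => /orP[/eqP->//|/Hy].
exists a; first by rewrite inE eqxx.
move=> z; rewrite inE => /orP[/eqP->//|/Hy]; lia.
Qed.

End Geo.

Theorem mainTheorem3 (R : realFieldType) (T : lotree R) :
  red_black T ->
  search_tree T ->
  uniq [seq s.2 | s <- leaves T] ->
  all (fun s => in_square s (0, 0)) (leaves T) ->
  conflict_free (leaves T) (sq_col T).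
Proof.
move=> _ st uy og p [s0 s0T s0p].
have uT : uniq (leaves T) := map_uniq uy.
have hasQ : has (fun s => in_square s p) (leaves T) by apply/hasP; exists s0.
case: (find_w st og hasQ) => w wT [Qsub [t0 t0T /andP[t0p lt0]]].
have [h0 E0] := hN_ex t0T.
have B0 := col_bounds E0.
have [_ Hb] := maxheightP E0.
have hw := Hb w wT lt0.
have t0Q0 : t0 \in [seq s <- leaves T | in_square s p] by rewrite mem_filter t0p t0T.
have [y] := argmax (sq_col T) t0Q0.
rewrite mem_filter => /andP[yp yT] Hy.
exists y => //; split => // s' s'T s'p ne; apply/eqP => ec.
have s'Q : s' \in [seq s <- leaves T | in_square s p] by rewrite mem_filter s'p s'T.
have t0Q : t0 \in [seq s <- leaves T | in_square s p] by rewrite mem_filter t0p t0T.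
have Ht := Hy _ t0Q.
apply: (no_conflict uT wT (Qsub _ s'T s'p) (Qsub _ yT yp) ne ec).
move: B0 hw Ht; rewrite ec; clear; lia.
Qed.
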